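(* For every unit vector $|\psi\rangle$ with reduced-state eigenvalues $p_1,\dots,p_d$, one has $\mathcal{E}_\star(\psi)=E_L(\psi)$ if and only if the quantity $\big|\sum_{i=1}^d\lambda_ip_{\sigma(i)}\big|$ takes the same value for all permutations $\sigma\in S_d$, where $\lambda_i=e^{i\theta_i}$ is the stellar spectrum. In particular, for $d=2$ and $d=3$, $\mathcal{E}_\star(\psi)=E_L(\psi)$ for all pure states $|\psi\rangle$.
   Context: Let $d=d_A\le d_B$, $d\ge 2$. The stellar spectrum is $\lambda_j=e^{i\theta_j}$, $\theta_j=\frac{(d-2j+1)\pi}{d}$, $j=1,\dots,d$. The stellar mirror entanglement is $\mathcal{E}_\star(\psi)=1-\max_W|\langle\psi|(W\otimes\mathbb{1})|\psi\rangle|^2$, the maximum over all unitaries $W$ on $\mathbb{C}^{d_A}$ whose eigenvalues are exactly the stellar spectrum. The linear entropy of entanglement is $E_L(\psi)=\frac{d}{d-1}\big(1-\sum_ip_i^2\big)$, where $p_i$ are the eigenvalues of $\mathrm{Tr}_B|\psi\rangle\langle\psi|$. *)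

(* Defs.v *)
(* Complex numbers: an arbitrary numClosedFieldType C
   (e.g. the complex numbers); algC is one instance. *)
From HB Require Import structures.
From mathcomp Require Import all_boot all_order all_fingroup all_algebra.
Set Implicit Arguments. Unset Strict Implicit. Unset Printing Implicit Defensive.
Import Order.TTheory GRing.Theory Num.Theory.
Local Open Scope ring_scope.

Section Defs.
Variable C : numClosedFieldType.

Definition adjmx m n (A : 'M[C]_(m, n)) : 'M[C]_(n, m) :=
  \matrix_(i, j) (A j i)^*.

(* decomposition of an index of C^{dA} (x) C^{dB} = C^{dA*dB};
   the index of the basis vector |i> (x) |j> is mxvec_index i j *)
Definition idx_pair dA dB (k : 'I_(dA * dB)) : 'I_dA * 'I_dB :=
  enum_val (cast_ord (esym (@mxvec_cast dA dB)) k).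

Definition kron dA dB (A : 'M[C]_dA) (B : 'M[C]_dB) : 'M[C]_(dA * dB) :=
  \matrix_(k, l) (A (idx_pair k).1 (idx_pair l).1 * B (idx_pair k).2 (idx_pair l).2).

Definition ptraceB dA dB (M : 'M[C]_(dA * dB)) : 'M[C]_dA :=
  \matrix_(i, i') \sum_(j < dB) M (mxvec_index i j) (mxvec_index i' j).

Definition unit_vec n (psi : 'cV[C]_n) : Prop := (adjmx psi *m psi) 0 0 = 1.

Definition rhoA dA dB (psi : 'cV[C]_(dA * dB)) : 'M[C]_dA :=
  ptraceB (psi *m adjmx psi).

(* stellar spectrum, 0-based: lambda_(j+1) = exp(i (d - 2(j+1) + 1) pi / d)
   = w ^ (d - 2j - 1) with w = d.-root (-1) = exp(i pi / d). *)
Definition stellar_lambda d (j : 'I_d) : C :=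
  (d.-root (-1 : C)) ^ (d%:Z - (2 * j + 1)%N%:Z).

Definition stellar_unitary d (W : 'M[C]_d) : Prop :=
  W *m adjmx W = 1%:M /\ char_poly W = \prod_(j < d) ('X - (stellar_lambda j)%:P).

Definition mirror_overlap dA dB (psi : 'cV[C]_(dA * dB)) (W : 'M[C]_dA) : C :=
  (adjmx psi *m kron W 1%:M *m psi) 0 0.

(* stellar_mirror_ent psi e  <->  E_star(psi) = e, i.e.
   max_W |<psi|(W (x) 1)|psi>|^2 exists (is attained) and equals 1 - e *)
Definition stellar_mirror_ent dA dB (psi : 'cV[C]_(dA * dB)) (e : C) : Prop :=
  (exists W : 'M[C]_dA, stellar_unitary W /\ `|mirror_overlap psi W| ^+ 2 = 1 - e)
  /\ (forall W : 'M[C]_dA, stellar_unitary W -> `|mirror_overlap psi W| ^+ 2 <= 1 - e).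

Definition linear_entropy d (p : 'I_d -> C) : C :=
  (d%:R / (d.-1)%:R) * (1 - \sum_(i < d) p i ^+ 2).

End Defs.
Arguments stellar_lambda {C d} j.

(* Main.v *)
Require Import Defs.
From HB Require Import structures.
From mathcomp Require Import all_boot all_order all_fingroup all_algebra.
From mathcomp Require Import ring lra zify.
Import Order.TTheory GRing.Theory Num.Theory.
Local Open Scope ring_scope.

Module Aux.
Import Num.Def.
Set Implicit Arguments. Unset Strict Implicit. Unset Printing Implicit Defensive.

Section Rearr.
Variable R : numFieldType.

Lemma exists_max_seq (I : eqType) (a : I -> R) (s : seq I) :
  (forall i, a i \is Num.real) -> s != [::] ->
  exists2 i0, i0 \in s & forall i, i \in s -> a i <= a i0.
Proof.
move=> ha; elim: s => [//|x s IH] _.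
case: (altP (s =P [::])) => [->|sn0].
  by exists x; rewrite ?mem_head // => i; rewrite inE => /eqP->.
have [m ms hm] := IH sn0.
have [hxm|hmx] := real_leP (ha x) (ha m).
- exists m; first by rewrite inE ms orbT.
  by move=> i; rewrite inE => /orP[/eqP->//|/hm].
- exists x; first by rewrite mem_head.
  move=> i; rewrite inE => /orP[/eqP->//|/hm him].
  exact: le_trans him (ltW hmx).
Qed.

Lemma exists_max_ord n (a : 'I_n.+1 -> R) :
  (forall i, a i \is Num.real) -> exists i0, forall i, a i <= a i0.
Proof.
move=> ha; have [|i0 _ h] := @exists_max_seq _ a (enum 'I_n.+1) ha.
  by apply/eqP => /(congr1 size); rewrite size_enum_ord.
by exists i0 => i; apply: h; rewrite mem_enum.
Qed.


Lemma shift_id n (a b : 'I_n -> R) (B : 'I_n -> 'I_n -> R) (a0 b0 : R) :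
  (forall i, \sum_j B i j = 1) -> (forall j, \sum_i B i j = 1) ->
  \sum_i \sum_j a i * B i j * b j =
  (a0 * \sum_j b j + b0 * \sum_i a i - a0 * b0 * n%:R) +
  \sum_i \sum_j (a0 - a i) * B i j * (b0 - b j).
Proof.
move=> hr hc.
have e : forall i j, (a0 - a i) * B i j * (b0 - b j) =
   a i * B i j * b j - a0 * (B i j * b j) - b0 * (a i * B i j) + a0 * b0 * B i j.
  by move=> i j; ring.
have s1 : \sum_i \sum_j a0 * (B i j * b j) = a0 * \sum_j b j.
  rewrite exchange_big /= mulr_sumr; apply: eq_bigr => j _.
  by rewrite -mulr_sumr -mulr_suml hc mul1r.
have s2 : \sum_i \sum_j b0 * (a i * B i j) = b0 * \sum_i a i.
  rewrite mulr_sumr; apply: eq_bigr => i _.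
  by rewrite -mulr_sumr -mulr_sumr hr mulr1.
have s3 : \sum_i \sum_j a0 * b0 * B i j = a0 * b0 * n%:R.
  rewrite (eq_bigr (fun _ => a0 * b0)) ?sumr_const ?card_ord ?mulr_natr //.
  by move=> i _; rewrite -mulr_sumr hr mulr1.
have H : \sum_i \sum_j (a0 - a i) * B i j * (b0 - b j) =
   \sum_i \sum_j a i * B i j * b j - a0 * \sum_j b j - b0 * \sum_i a i + a0 * b0 * n%:R.
  rewrite -s1 -s2 -s3 -!sumrB -big_split /=; apply: eq_bigr => i _.
  by rewrite -!sumrB -big_split /=; apply: eq_bigr => j _; rewrite e.
rewrite H; ring.
Qed.


Lemma shift_id_perm n (a b : 'I_n -> R) (s : 'S_n) (a0 b0 : R) :
  \sum_i a i * b (s i) =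
  (a0 * \sum_j b j + b0 * \sum_i a i - a0 * b0 * n%:R) +
  \sum_i (a0 - a i) * (b0 - b (s i)).
Proof.
have hb : \sum_i b (s i) = \sum_j b j.
  by rewrite [RHS](reindex_inj (@perm_inj _ s)).
have H : \sum_i (a0 - a i) * (b0 - b (s i)) =
  \sum_i a i * b (s i) - a0 * \sum_i b (s i) - b0 * \sum_i a i + a0 * b0 * n%:R.
  rewrite !mulr_sumr -!sumrB.
  rewrite [a0 * b0 * n%:R]mulr_natr -[n in _ *+ n]card_ord -sumr_const -big_split /=.
  by apply: eq_bigr => i _; ring.
rewrite H hb; ring.
Qed.

Lemma rearr n : forall (a b : 'I_n -> R) (B : 'I_n -> 'I_n -> R),
  (forall i, a i \is Num.real) -> (forall j, b j \is Num.real) ->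
  (forall i j, 0 <= B i j) ->
  (forall i, \sum_j B i j = 1) -> (forall j, \sum_i B i j = 1) ->
  exists s : 'S_n, \sum_i \sum_j a i * B i j * b j <= \sum_i a i * b (s i).
Proof.
elim: n => [|n IH] a b B ha hb hB hr hc.
  by exists 1%g; rewrite !big_ord0.
have [i0 hi0] := exists_max_ord ha.
have [j0 hj0] := exists_max_ord hb.
pose al i := a i0 - a i.
pose be j := b j0 - b j.
have alge i : 0 <= al i by rewrite subr_ge0.
have bege j : 0 <= be j by rewrite subr_ge0.
pose al' k := al (lift i0 k).
pose be' l := be (lift j0 l).
pose B' k l := B (lift i0 k) (lift j0 l).
have red : \sum_i \sum_j al i * B i j * be j = \sum_k \sum_l al' k * B' k l * be' l.
  rewrite (bigD1_ord i0) //= /al subrr big1 ?add0r; last by move=> j _; rewrite !mul0r.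
  apply: eq_bigr => k _; rewrite (bigD1_ord j0) //= /be subrr mulr0 add0r.
  by [].
pose u k := 1 - \sum_l B' k l.
pose v l := 1 - \sum_k B' k l.
have uge k : 0 <= u k.
  rewrite subr_ge0; have := hr (lift i0 k); rewrite (bigD1_ord j0) //= => <-.
  by rewrite lerDr.
have vge l : 0 <= v l.
  rewrite subr_ge0; have := hc (lift j0 l); rewrite (bigD1_ord i0) //= => <-.
  by rewrite lerDr.
pose S := \sum_k u k.
have SV : \sum_l v l = S.
  rewrite /S /u /v !sumrB exchange_big /=; congr (_ - _).
have Sge : 0 <= S by apply: sumr_ge0.
pose B'' k l := B' k l + u k * v l / S.
have hB'' k l : 0 <= B'' k l.
  by apply: addr_ge0; [exact: hB | rewrite divr_ge0 // mulr_ge0].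
have hr'' k : \sum_l B'' k l = 1.
  rewrite big_split /= -mulr_suml -mulr_sumr SV.
  have [S0|Sn0] := eqVneq S 0.
    have : u k = 0.
      by move/eqP: S0; rewrite /S psumr_eq0 // => /allP /(_ k (mem_index_enum _)) /eqP.
    move=> uk0; rewrite uk0 !mul0r addr0.
    by move: uk0; rewrite /u => /eqP; rewrite subr_eq0 eq_sym => /eqP.
  by rewrite mulfK // /u addrC subrK.
have hc'' l : \sum_k B'' k l = 1.
  rewrite big_split /= -mulr_suml -mulr_suml.
  have [S0|Sn0] := eqVneq S 0.
    have : v l = 0.
      move/eqP: S0; rewrite -SV psumr_eq0 // => /allP /(_ l (mem_index_enum _)) /eqP.
      by [].
    move=> vl0; rewrite vl0 !mulr0 mul0r addr0.
    by move: vl0; rewrite /v => /eqP; rewrite subr_eq0 eq_sym => /eqP.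
  by rewrite -/S [S * _]mulrC mulfK // /v addrC subrK.
have [tau htau] := IH al' be' B'' (fun k => rpredB (ha _) (ha _))
   (fun l => rpredB (hb _) (hb _)) hB'' hr'' hc''.
exists (lift_perm i0 j0 tau).
rewrite (shift_id a b (a i0) (b j0) hr hc) (shift_id_perm a b _ (a i0) (b j0)).
rewrite lerD2l.
apply: (le_trans _ (le_trans htau _)).
  have -> : \sum_i \sum_j (a i0 - a i) * B i j * (b j0 - b j) =
     \sum_k \sum_l al' k * B' k l * be' l by exact: red.
  apply: ler_sum => k _; apply: ler_sum => l _.
  rewrite /B'' (mulrDr (al' k)) (mulrDl (al' k * B' k l)) lerDl; apply: mulr_ge0; last exact: bege.
  by apply: mulr_ge0; [exact: alge | rewrite divr_ge0 // mulr_ge0].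
rewrite [X in _ <= X](bigD1_ord i0) //= subrr mul0r add0r.
by rewrite le_eqVlt; apply/orP; left; apply/eqP; apply: eq_bigr => k _; rewrite lift_perm_lift.
Qed.
End Rearr.

Section RearrC.
Variable C : numClosedFieldType.

Lemma Re_sum (I : finType) (F : I -> C) : 'Re (\sum_i F i) = \sum_i 'Re (F i).
Proof. exact: raddf_sum. Qed.

Lemma rearrC n (a e : 'I_n -> C) (B : 'I_n -> 'I_n -> C) :
  (forall i, a i \is Num.real) ->
  (forall i j, 0 <= B i j) ->
  (forall i, \sum_j B i j = 1) -> (forall j, \sum_i B i j = 1) ->
  exists s : 'S_n, `|\sum_i \sum_j a i * B i j * e j| <= `|\sum_i a i * e (s i)|.
Proof.
move=> ha hB hr hc.
set z := \sum_i \sum_j a i * B i j * e j.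
have [z0|zn0] := eqVneq z 0.
  by exists 1%g; rewrite z0 normr0.
pose u := z^* / `|z|.
have nz : `|z| != 0 by rewrite normr_eq0.
have uz : u * z = `|z|.
  by rewrite /u mulrAC [z^* * z]mulrC -normCK expr2 mulfK.
have nu : `|u| = 1 by rewrite /u normrM normfV normr_id norm_conjC divff.
have [s hs] := @rearr C n a (fun j => 'Re (u * e j)) B ha (fun j => Creal_Re _) hB hr hc.
exists s.
have -> : `|z| = 'Re (u * z) by rewrite uz; apply/esym/Creal_ReP; apply: normr_real.
have -> : 'Re (u * z) = \sum_i \sum_j a i * B i j * 'Re (u * e j).
  rewrite /z mulr_sumr Re_sum; apply: eq_bigr => i _.
  rewrite mulr_sumr Re_sum; apply: eq_bigr => j _.
  by rewrite mulrCA (ReMl (rpredM (ha i) (ger0_real (hB i j)))).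
apply: (le_trans hs).
have -> : \sum_i a i * 'Re (u * e (s i)) = 'Re (u * \sum_i a i * e (s i)).
  rewrite mulr_sumr Re_sum; apply: eq_bigr => i _.
  by rewrite mulrCA (ReMl (ha i)).
apply: le_trans (leif_Re_Creal _).1 _.
by rewrite normrM nu mul1r.
Qed.
End RearrC.

Section Lam.
Variable C : numClosedFieldType.
Variable d : nat.
Hypothesis d2 : (2 <= d)%N.

Let w : C := d.-root (-1).

Lemma w_d : w ^+ d = -1.
Proof. by rewrite /w rootCK //; lia. Qed.

Lemma w_neq0 : w != 0.
Proof. by apply/eqP => h; have := w_d; rewrite h expr0n; case: d d2 => // n _ /eqP; rewrite eq_sym oppr_eq0 oner_eq0. Qed.

Lemma norm_w : `|w| = 1.
Proof.
apply/eqP; rewrite -(@pexpr_eq1 _ _ d) //; first by rewrite -normrX w_d normrN normr1.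
lia.
Qed.

Lemma w2_neq1 : w ^+ 2 != 1.
Proof.
apply/negP; rewrite -subr_eq0 subr_sqr_1 mulf_eq0 => /orP[|].
  rewrite subr_eq0 => /eqP h; have := w_d; rewrite h expr1n => /eqP.
  by rewrite -addr_eq0 -mulr2n pnatr_eq0.
rewrite addr_eq0 => /eqP h.
have := @rootC_lt0 C d (-1); rewrite -/w h; rewrite ltrN10 => /(_ _).
by move=> H; have := H ltac:(lia).
Qed.

Definition zeta : C := (w ^+ 2)^-1.

Lemma lamE (j : 'I_d) : stellar_lambda j = w ^+ d.-1 * zeta ^+ j.
Proof.
rewrite /stellar_lambda -/w.
have -> : (d%:Z - (2 * j + 1)%N%:Z = (d.-1)%:Z + - (2 * j)%N%:Z)%R.
  have := ltn_ord j; lia.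
rewrite expfzDr ?w_neq0 // -exprnN /zeta exprVn -exprM.
by [].
Qed.


Lemma zeta_d : zeta ^+ d = 1.
Proof. by rewrite /zeta exprVn -exprM mulnC exprM w_d sqrrN expr1n invr1. Qed.

Lemma zeta_neq1 : zeta != 1.
Proof. by rewrite /zeta invr_eq1 w2_neq1. Qed.

Lemma norm_zeta : `|zeta| = 1.
Proof. by rewrite /zeta normfV normrX norm_w expr1n invr1. Qed.

Lemma norm_lam (j : 'I_d) : `|(stellar_lambda j : C)| = 1.
Proof. by rewrite lamE normrM !normrX norm_w norm_zeta !expr1n mulr1. Qed.

Lemma sum_lam : \sum_(j < d) (stellar_lambda j : C) = 0.
Proof.
rewrite (eq_bigr (fun j : 'I_d => w ^+ d.-1 * zeta ^+ j)); last by move=> j _; rewrite lamE.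
rewrite -mulr_sumr.
have : (zeta - 1) * \sum_(j < d) zeta ^+ j = 0.
  by rewrite -subrX1 zeta_d subrr.
move/eqP; rewrite mulf_eq0 => /orP [|/eqP->]; last by rewrite mulr0.
by rewrite subr_eq0 (negbTE zeta_neq1).
Qed.
End Lam.

Lemma perm2_exists (T : finType) (i k i' k' : T) : (i == k) = (i' == k') ->
  exists pi : {perm T}, pi i' = i /\ pi k' = k.
Proof.
have [eik' | nik'] := eqVneq i' k'.
  move=> /eqP eik; subst k' k; exists (tperm i' i); by rewrite tpermL.
move=> /negbT nik.
pose pi1 := tperm i' i; pose k1 := pi1 k'.
have ik1 : i != k1.
  apply/eqP => h; move: nik'; rewrite -(inj_eq (@perm_inj _ pi1)) -/k1 -h /pi1 tpermL.
  by rewrite eqxx.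
exists (pi1 * tperm k1 k)%g; rewrite !permM -/k1 tpermL; split => //.
rewrite /pi1 tpermL tpermD //; first by rewrite eq_sym.
by rewrite eq_sym.
Qed.

Section Avg.
Variable C : numClosedFieldType.

Lemma conj_real (x : C) : x \is Num.real -> x^* = x.
Proof. by move/CrealP. Qed.

Lemma sum_delta n (f : 'I_n -> C) i : \sum_k f k * (i == k)%:R = f i.
Proof.
rewrite (bigD1 i) //= eqxx mulr1 big1 ?addr0 // => k nki.
by rewrite eq_sym (negbTE nki) mulr0.
Qed.

Lemma avg_id d (lam q : 'I_d -> C) : (1 < d)%N ->
  (forall i, q i \is Num.real) -> (forall j, `|lam j| = 1) ->
  \sum_j lam j = 0 -> \sum_i q i = 1 ->
  (d.-1)%:R * \sum_(s : 'S_d) `|\sum_i lam i * q (s i)| ^+ 2 =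
  #|{perm 'I_d}|%:R * (d%:R * \sum_i q i ^+ 2 - 1).
Proof.
move=> d2 hq hl hsl hsq.
pose N : C := #|{perm 'I_d}|%:R.
pose T i k := \sum_(s : 'S_d) q (s i) * q (s k).
have e1 s : `|\sum_i lam i * q (s i)| ^+ 2 =
    \sum_i \sum_k lam i * (lam k)^* * (q (s i) * q (s k)).
  rewrite normCK rmorph_sum mulr_suml; apply: eq_bigr => i _.
  rewrite mulr_sumr; apply: eq_bigr => k _.
  by rewrite rmorphM /= (conj_real (hq _)); ring.
have e2 : \sum_(s : 'S_d) `|\sum_i lam i * q (s i)| ^+ 2 =
    \sum_i \sum_k lam i * (lam k)^* * T i k.
  under eq_bigr do rewrite e1.
  rewrite exchange_big; apply: eq_bigr => i _.
  rewrite exchange_big; apply: eq_bigr => k _.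
  by rewrite mulr_sumr.
have sym i k i' k' : (i == k) = (i' == k') -> T i' k' = T i k.
  move=> /perm2_exists [pi [h1 h2]].
  rewrite /T (reindex_inj (mulgI pi)); apply: eq_bigr => s _.
  by rewrite !permM h1 h2.
pose o0 : 'I_d := Ordinal (ltnW d2).
pose o1 : 'I_d := Ordinal d2.
pose t1 := T o0 o0.
pose t2 := T o0 o1.
have Te i k : T i k = t2 + (t1 - t2) * (i == k)%:R.
  have [->|nik] := eqVneq i k.
    by rewrite mulr1 addrC subrK /t1; apply: sym; rewrite !eqxx.
  by rewrite mulr0 addr0 /t2; apply: sym; rewrite (negbTE nik).
have Ed : \sum_i T i i = N * \sum_i q i ^+ 2.
  rewrite /T exchange_big /=.
  rewrite (eq_bigr (fun _ => \sum_i q i ^+ 2)); first by rewrite sumr_const -mulr_natl.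
  move=> s _; rewrite [RHS](reindex_inj (@perm_inj _ s)) /=.
  by apply: eq_bigr => i _; rewrite expr2.
have Ed' : \sum_i T i i = d%:R * t1.
  rewrite (eq_bigr (fun _ => t1)) ?sumr_const ?card_ord ?mulr_natl //.
  by move=> i _; rewrite Te eqxx mulr1 addrC subrK.
have Ea : \sum_i \sum_k T i k = N.
  rewrite /T (eq_bigr (fun i => \sum_(s : 'S_d) \sum_k q (s i) * q (s k))); last first.
    by move=> i _; rewrite exchange_big.
  rewrite exchange_big /= (eq_bigr (fun _ => 1)); first by rewrite sumr_const.
  move=> s _; under eq_bigr do rewrite -mulr_sumr.
  rewrite -mulr_suml.
  have hs : \sum_i q (s i) = 1 by rewrite -hsq [RHS](reindex_inj (@perm_inj _ s)).
  by rewrite hs mulr1.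
have Ea' : \sum_i \sum_k T i k = d%:R * d%:R * t2 + d%:R * (t1 - t2).
  under eq_bigr do (under eq_bigr do rewrite Te).
  rewrite (eq_bigr (fun _ => d%:R * t2 + (t1 - t2))); last first.
    move=> i _; rewrite big_split /= sumr_const card_ord.
    by rewrite (sum_delta (fun _ => t1 - t2)) mulr_natl.
  rewrite sumr_const card_ord -(mulr_natl (d%:R * t2 + (t1 - t2)) d).
  ring.
have E3 : \sum_i \sum_k lam i * (lam k)^* * T i k = d%:R * (t1 - t2).
  have hc : \sum_k (lam k)^* = 0 by rewrite -rmorph_sum hsl rmorph0.
  rewrite (eq_bigr (fun i => (t1 - t2))).
    by rewrite sumr_const card_ord mulr_natl.
  move=> i _.
  rewrite (eq_bigr (fun k => lam i * t2 * (lam k)^* +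
            (lam i * (lam k)^* * (t1 - t2)) * (i == k)%:R)); last first.
    by move=> k _; rewrite Te; ring.
  rewrite big_split /= -mulr_sumr hc mulr0 add0r.
  rewrite (sum_delta (fun k => lam i * (lam k)^* * (t1 - t2))).
  by rewrite -normCK hl expr1n mul1r.
have dE : (d.-1)%:R = d%:R - 1 :> C.
  by rewrite -{2}(prednK (ltnW d2)) -addn1 natrD addrK.
rewrite e2 E3 dE -/N.
have -> : N * (d%:R * \sum_i q i ^+ 2 - 1) = d%:R * (N * \sum_i q i ^+ 2) - N by ring.
rewrite -Ed Ed' -Ea Ea'; ring.
Qed.
End Avg.

Section Mat.
Variable C : numClosedFieldType.
Local Open Scope sesquilinear_scope.

Lemma adjmxE m n (A : 'M[C]_(m, n)) : adjmx A = A ^t conjC.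
Proof. by apply/matrixP => i j; rewrite !mxE. Qed.

Lemma idx_pairK m n (i : 'I_m) (j : 'I_n) : idx_pair (mxvec_index i j) = (i, j).
Proof. by rewrite /idx_pair /mxvec_index cast_ordK enum_rankK. Qed.

Lemma sum_pair m n (F : 'I_(m * n) -> C) :
  \sum_k F k = \sum_i \sum_j F (mxvec_index i j).
Proof.
rewrite pair_big /=.
rewrite (reindex (fun p : 'I_m * 'I_n => mxvec_index p.1 p.2)) //=.
exists (fun k => idx_pair k) => [[i j] _|k _]; first by rewrite idx_pairK.
by case: (mxvec_indexP k) => i j; rewrite idx_pairK.
Qed.

Variables dA dB : nat.

Definition Mpsi (psi : 'cV[C]_(dA * dB)) : 'M[C]_(dA, dB) :=
  \matrix_(i, j) psi (mxvec_index i j) 0.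

Lemma rhoAE (psi : 'cV[C]_(dA * dB)) : rhoA psi = Mpsi psi *m (Mpsi psi) ^t conjC.
Proof.
apply/matrixP => i i'; rewrite !mxE; apply: eq_bigr => j _.
by rewrite !mxE big_ord1 !mxE.
Qed.

Lemma overlapE (psi : 'cV[C]_(dA * dB)) (W : 'M[C]_dA) : mirror_overlap psi W = \tr (rhoA psi *m W).
Proof.
rewrite /mirror_overlap /mxtrace mxE sum_pair.
have -> : \sum_i \sum_j (adjmx psi *m kron W 1%:M) 0 (mxvec_index i j) * psi (mxvec_index i j) 0
   = \sum_i \sum_j \sum_i0 (psi (mxvec_index i0 j) 0)^* * W i0 i * psi (mxvec_index i j) 0.
  apply: eq_bigr => i _; apply: eq_bigr => j _.
  rewrite mxE sum_pair mulr_suml; apply: eq_bigr => i0 _.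
  rewrite (bigD1 j) //= big1 ?addr0; last first.
    move=> j' nj; rewrite /adjmx /kron !mxE !idx_pairK /= (negbTE nj) mulr0n !mulr0.
    by [].
  by rewrite /adjmx /kron !mxE !idx_pairK /= eqxx mulr1n mulr1.
apply: eq_bigr => i _; rewrite mxE exchange_big /=; apply: eq_bigr => i0 _.
rewrite rhoAE mxE mulr_suml; apply: eq_bigr => j _.
by rewrite !mxE; ring.
Qed.

Lemma unit_trace (psi : 'cV[C]_(dA * dB)) : unit_vec psi -> \tr (rhoA psi) = 1.
Proof.
rewrite /unit_vec mxE sum_pair => <-; rewrite /mxtrace; apply: eq_bigr => i _.
rewrite rhoAE mxE; apply: eq_bigr => j _; rewrite !mxE; ring.
Qed.
End Mat.

Section Spec.
Variable C : numClosedFieldType.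
Local Open Scope sesquilinear_scope.

Lemma unitary_sq n (P : 'M[C]_n) : P \is unitarymx -> P ^t* *m P = 1%:M.
Proof. by move/unitarymxP; apply: mulmx1C. Qed.

Lemma normal_decomp n (A : 'M[C]_n) : A \is normalmx ->
  exists P : 'M[C]_n, exists D : 'rV[C]_n,
    P \is unitarymx /\ A = P ^t* *m diag_mx D *m P.
Proof.
move/orthomx_spectralP => h; exists (spectralmx A), (spectral_diag A).
split; first exact: spectral_unitarymx.
by rewrite {1}h invmx_unitary // spectral_unitarymx.
Qed.

Lemma char_poly_conj n (P A : 'M[C]_n) : P ^t* *m P = 1%:M ->
  char_poly (P ^t* *m A *m P) = char_poly A.
Proof.
move=> hP.
pose Pp := map_mx (@polyC C) P; pose Qp := map_mx (@polyC C) (P ^t*).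
have QP : Qp *m Pp = 1%:M by rewrite -map_mxM hP map_mx1.
rewrite /char_poly.
have -> : char_poly_mx (P ^t* *m A *m P) = Qp *m char_poly_mx A *m Pp.
  rewrite /char_poly_mx !map_mxM mulmxBr mulmxBl -/Pp -/Qp; congr (_ - _).
  by rewrite -mulmxA -scalar_mxC mulmxA QP mul1mx.
by rewrite !det_mulmx mulrAC -det_mulmx QP det1 mul1r.
Qed.

Lemma char_poly_diag n (D : 'rV[C]_n) :
  char_poly (diag_mx D) = \prod_i ('X - (D 0 i)%:P).
Proof.
rewrite char_poly_trig ?diag_mx_is_trig //; apply: eq_bigr => i _.
by rewrite mxE eqxx mulr1n.
Qed.

Lemma prod_perm_seq (s t : seq C) :
  \prod_(x <- s) ('X - x%:P) = \prod_(x <- t) ('X - x%:P) -> perm_eq s t.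
Proof.
elim: s t => [|x s IH] t h.
  have := congr1 (fun q : {poly C} => size q) h; rewrite /= big_nil size_poly1 size_prod_XsubC.
  by case: t {h} => // _ _ [].
have xt : x \in t.
  by rewrite -root_prod_XsubC -h big_cons rootM root_XsubC eqxx.
have pt := perm_to_rem xt.
rewrite (perm_big _ pt) /= !big_cons in h.
have /IH hs : \prod_(x <- s) ('X - x%:P) = \prod_(x0 <- rem x t) ('X - x0%:P).
  by apply: (@mulfI _ ('X - x%:P)); rewrite ?polyXsubC_eq0.

have pt' : perm_eq (x :: rem x t) t by rewrite perm_sym.
by apply: perm_trans pt'; rewrite perm_cons.
Qed.

Lemma prod_perm n (a b : 'I_n -> C) :
  \prod_i ('X - (a i)%:P) = \prod_i ('X - (b i)%:P) ->
  exists tau : 'S_n, forall i, a i = b (tau i).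
Proof.
move=> h.
have : perm_eq [tuple a i | i < n] [tuple b i | i < n].
  apply: prod_perm_seq; rewrite !big_tuple.
  by under eq_bigr do rewrite tnth_mktuple; under [RHS]eq_bigr do rewrite tnth_mktuple.
case/tuple_permP => tau htau; exists tau => i.
have := congr1 (fun s => nth 0 s i) htau.
by rewrite !nth_mktuple tnth_mktuple.
Qed.
End Spec.

Section Phys.
Variable C : numClosedFieldType.
Local Open Scope sesquilinear_scope.
Variables d n : nat.

Lemma rho_decomp (psi : 'cV[C]_(d * n)) :
  exists P : 'M[C]_d, exists D : 'rV[C]_d,
    [/\ P \is unitarymx, rhoA psi = P ^t* *m diag_mx D *m P &
        forall i, D 0 i \is Num.real].
Proof.
set M := Mpsi psi.
have herm : (rhoA psi) ^t* = rhoA psi.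
  by rewrite rhoAE trmx_mul map_mxM trmxCK.
have nrm : rhoA psi \is normalmx by apply/normalmxP; rewrite herm.
have [P [D [uP hrho]]] := normal_decomp nrm.
exists P, D; split => // i.
have hd : diag_mx D = (P *m M) *m (P *m M) ^t*.
  have e1 : P *m P ^t* = 1%:M by apply/unitarymxP.
  rewrite trmx_mul map_mxM mulmxA -(mulmxA P M) -rhoAE hrho.
  by rewrite !mulmxA e1 mul1mx -!mulmxA e1 mulmx1.
have := congr1 (fun A : 'M[C]_d => A i i) hd; rewrite /= mxE eqxx mulr1n => ->.
rewrite mxE; apply: rpred_sum => j _; rewrite !mxE.
by apply: ger0_real; rewrite mul_conjC_ge0.
Qed.

Lemma trace_formula (P Q : 'M[C]_d) (D E : 'rV[C]_d) :
  \tr ((P ^t* *m diag_mx D *m P) *m (Q ^t* *m diag_mx E *m Q)) =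
  \sum_i \sum_j D 0 i * ((P *m Q ^t*) i j * ((P *m Q ^t*) i j)^*) * E 0 j.
Proof.
set U := P *m Q ^t*.
rewrite -!mulmxA mxtrace_mulC.
have -> : diag_mx D *m (P *m (Q ^t* *m (diag_mx E *m Q))) *m P ^t* =
          diag_mx D *m U *m diag_mx E *m U ^t*.
  by rewrite /U trmx_mul map_mxM trmxCK !mulmxA.
rewrite /mxtrace; apply: eq_bigr => i _.
rewrite mxE; apply: eq_bigr => j _.
rewrite mul_mx_diag mul_diag_mx !mxE; ring.
Qed.

Lemma unitary_mulC (P Q : 'M[C]_d) : P \is unitarymx -> Q \is unitarymx ->
  (P *m Q ^t*) \is unitarymx.
Proof. by move=> uP uQ; rewrite mul_unitarymx // trmxC_unitary. Qed.

Lemma unitary_rows (U : 'M[C]_d) : U \is unitarymx ->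
  (forall i, \sum_j U i j * (U i j)^* = 1) /\ (forall j, \sum_i U i j * (U i j)^* = 1).
Proof.
move=> uU; have hU : U *m U ^t* = 1%:M by apply/unitarymxP.
split.
  move=> i; have := congr1 (fun A : 'M[C]_d => A i i) hU.
  by rewrite /= !mxE eqxx mulr1n => <-; apply: eq_bigr => j _; rewrite !mxE.
move=> j; have := congr1 (fun A : 'M[C]_d => A j j) (unitary_sq uU).
by rewrite /= !mxE eqxx mulr1n => <-; apply: eq_bigr => i _; rewrite !mxE mulrC.
Qed.

Lemma build_W (P : 'M[C]_d) (D e : 'rV[C]_d) : P \is unitarymx ->
  (forall i, `|e 0 i| = 1) ->
  [/\ (P ^t* *m diag_mx e *m P) *m adjmx (P ^t* *m diag_mx e *m P) = 1%:M,
      char_poly (P ^t* *m diag_mx e *m P) = \prod_i ('X - (e 0 i)%:P) &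
      \tr ((P ^t* *m diag_mx D *m P) *m (P ^t* *m diag_mx e *m P)) =
        \sum_i D 0 i * e 0 i].
Proof.
move=> uP he.
have e1 : P *m P ^t* = 1%:M by apply/unitarymxP.
split.
- have ud : diag_mx e \is unitarymx.
    apply/unitarymxP; apply/matrixP => i j; rewrite tr_diag_mx map_diag_mx mul_mx_diag !mxE.
    have [->|nij] := eqVneq i j; last by rewrite mulr0n mul0r.
    by rewrite !mulr1n -normCK he expr1n.
  rewrite adjmxE; apply/unitarymxP.
  by rewrite !mul_unitarymx ?trmxC_unitary.
- by rewrite char_poly_conj ?unitary_sq // char_poly_diag.
- rewrite trace_formula e1; apply: eq_bigr => i _.
  rewrite (bigD1 i) //= big1 ?addr0; first by rewrite !mxE eqxx mulr1n conjC1 !mulr1.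
  by move=> j nji; rewrite !mxE eq_sym (negbTE nji) mulr0n mul0r mulr0 mul0r.
Qed.
End Phys.

Section Sval.
Variable C : numClosedFieldType.
Variable d : nat.

Definition sval (f g : 'I_d -> C) (s : 'S_d) := `|\sum_i f i * g (s i)|.

Lemma sval_sym f g s : sval f g s = sval g f s^-1.
Proof.
rewrite /sval (reindex_inj (@perm_inj _ s^-1)); congr `|_|; apply: eq_bigr => i _.
by rewrite permKV mulrC.
Qed.

Lemma sval_r f g h (tau : 'S_d) : (forall i, g i = h (tau i)) ->
  forall s, sval f g s = sval f h (s * tau).
Proof.
by move=> hg s; rewrite /sval; congr `|_|; apply: eq_bigr => i _; rewrite permM hg.
Qed.

Lemma sval_l f g h (tau : 'S_d) : (forall i, f i = h (tau i)) ->
  forall s, sval f g s = sval h g (tau^-1 * s).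
Proof.
move=> hf s; rewrite sval_sym [RHS]sval_sym (sval_r _ hf); congr sval.
by rewrite invMg invgK.
Qed.
End Sval.

Section Main.
Variable C : numClosedFieldType.
Local Open Scope sesquilinear_scope.
Variables d n : nat.
Hypothesis d2 : (2 <= d)%N.

Let lam : 'I_d -> C := fun j => stellar_lambda j.

Lemma stellar_unitaryP (W : 'M[C]_d) : stellar_unitary W ->
  W \is unitarymx /\ char_poly W = \prod_j ('X - (lam j)%:P).
Proof. by case=> h1 h2; split => //; apply/unitarymxP; rewrite -adjmxE. Qed.

Variables (psi : 'cV[C]_(d * n)) (P : 'M[C]_d) (D : 'rV[C]_d) (p : 'I_d -> C)
  (tau : 'S_d).
Hypotheses (uP : P \is unitarymx) (hrho : rhoA psi = P ^t* *m diag_mx D *m P)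
  (hD : forall i, D 0 i \is Num.real) (htau : forall i, p i = D 0 (tau i)).

Lemma K1 s : exists W, stellar_unitary W /\ `|mirror_overlap psi W| = sval lam p s.
Proof.
pose pi : 'S_d := ((s * tau)^-1)%g.
pose e : 'rV[C]_d := \row_j lam (pi j).
have he j : `|e 0 j| = 1 by rewrite mxE norm_lam.
have [hu hc ht] := build_W D uP he.
exists (P ^t* *m diag_mx e *m P); split.
  split => //; rewrite hc [RHS](reindex_inj (@perm_inj _ pi)).
  by apply: eq_bigr => j _; rewrite mxE.
rewrite overlapE hrho ht (sval_r _ htau) sval_sym -/pi.
by rewrite /sval; congr `|_|; apply: eq_bigr => j _; rewrite mxE.
Qed.

Lemma K2 W : stellar_unitary W -> exists s, `|mirror_overlap psi W| <= sval lam p s.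
Proof.
move=> /stellar_unitaryP [uW cW].
have nW : W \is normalmx.
  apply/normalmxP; rewrite (unitary_sq uW); exact/unitarymxP.
have [Q [E [uQ hW]]] := normal_decomp nW.
have [tau2 htau2] : exists tau2 : 'S_d, forall k, E 0 k = lam (tau2 k).
  apply: prod_perm; rewrite -char_poly_diag -cW hW char_poly_conj //.
  exact: unitary_sq.
set U := P *m Q ^t*.
have uU : U \is unitarymx by apply: unitary_mulC.
have [hr hc] := unitary_rows uU.
have [s0 hs0] := @rearrC _ _ (fun i => D 0 i) (fun j => E 0 j)
   (fun i j => U i j * (U i j)^*) hD (fun i j => mul_conjC_ge0 _) hr hc.
have hD' : forall i, D 0 i = p ((tau^-1)%g i) by move=> i; rewrite htau permKV.
exists ((s0 * tau2)^-1 * tau^-1)%g.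
rewrite overlapE hrho hW trace_formula -/U.
apply: (le_trans hs0).
rewrite -[X in X <= _]/(sval (fun i => D 0 i) (fun j => E 0 j) s0).
rewrite (sval_r _ htau2) sval_sym (sval_r _ hD').
by [].
Qed.
End Main.


Section Part1.
Variable C : numClosedFieldType.
Local Open Scope sesquilinear_scope.

Lemma part1 (dA dB : nat) (hdA : (2 <= dA)%N) (psi : 'cV[C]_(dA * dB)) (p : 'I_dA -> C) :
  unit_vec psi ->
  char_poly (rhoA psi) = \prod_(i < dA) ('X - (p i)%:P) ->
  (stellar_mirror_ent psi (linear_entropy p) <->
   (forall s t : 'S_dA,
      `|\sum_(i < dA) stellar_lambda i * p (s i)|
      = `|\sum_(i < dA) stellar_lambda i * p (t i)|)).
Proof.
move=> hu hcp.
have [P [D [uP hrho hD]]] := rho_decomp psi.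
have cpD : char_poly (rhoA psi) = \prod_i ('X - (D 0 i)%:P).
  by rewrite hrho char_poly_conj ?unitary_sq // char_poly_diag.
have [tau htau] : exists tau : 'S_dA, forall i, p i = D 0 (tau i).
  by apply: prod_perm; rewrite -hcp cpD.
have hpr i : p i \is Num.real by rewrite htau.
have hsum : \sum_i p i = 1.
  rewrite -(unit_trace hu) hrho mxtrace_mulC mulmxA.
  have -> : P *m P ^t* = 1%:M by apply/unitarymxP.
  rewrite mul1mx mxtrace_diag [RHS](reindex_inj (@perm_inj _ tau)).
  by apply: eq_bigr => i _; rewrite htau.
pose lam : 'I_dA -> C := fun j => stellar_lambda j.
pose N : C := #|{perm 'I_dA}|%:R.
pose m := 1 - linear_entropy p.
have havg := avg_id hdA hpr (norm_lam C hdA) (sum_lam C hdA) hsum.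
have dn0 : (dA.-1)%:R != 0 :> C by rewrite pnatr_eq0; lia.
have dE : (dA.-1)%:R = dA%:R - 1 :> C.
  by rewrite -{2}(prednK (ltnW hdA)) -addn1 natrD addrK.
have hm : (dA.-1)%:R * m = dA%:R * \sum_i p i ^+ 2 - 1.
  rewrite /m /linear_entropy mulrBr mulr1 mulrA [_ * (dA%:R / _)]mulrC.
  rewrite divfK // dE; ring.
have hsq : \sum_(s : 'S_dA) sval lam p s ^+ 2 = N * m.
  apply: (mulfI dn0); rewrite [RHS]mulrCA hm -havg.
  by [].
have hN : N != 0.
  rewrite pnatr_eq0 -lt0n; apply/card_gt0P; by exists 1%g.
have sv (s : 'S_dA) : `|\sum_(i < dA) stellar_lambda i * p (s i)| = sval lam p s by [].
split.
- case=> [[W0 [sW0 e0]] hmax] s t; rewrite !sv.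
  have le s' : sval lam p s' ^+ 2 <= m.
    have [W [sW eW]] := K1 hdA uP hrho htau s'.
    by rewrite -eW hmax.
  have z : \sum_(s' : 'S_dA) (m - sval lam p s' ^+ 2) = 0.
    by rewrite sumrB hsq sumr_const -mulr_natl subrr.
  have eqm s' : sval lam p s' ^+ 2 = m.
    have h2 : forall s'' : 'S_dA, true -> 0 <= m - sval lam p s'' ^+ 2.
      by move=> s'' _; rewrite subr_ge0 le.
    have := @psumr_eq0P _ _ _ _ h2 z s' isT.
    by move/eqP; rewrite subr_eq0 eq_sym => /eqP.
  apply/eqP; rewrite -(eqrXn2 (_ : 0 < 2)%N) ?normr_ge0 //.
  by rewrite /sval in eqm *; rewrite !eqm.
- move=> hc.
  pose c := sval lam p 1%g.
  have hcs (s : 'S_dA) : sval lam p s = c by rewrite /c -!sv (hc s 1%g).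
  have cm : c ^+ 2 = m.
    apply: (mulfI hN); rewrite -hsq (eq_bigr (fun _ => c ^+ 2)); last first.
      by move=> s _; rewrite hcs.
    by rewrite sumr_const /N mulr_natl.
  split.
    have [W [sW eW]] := K1 hdA uP hrho htau 1%g.
    by exists W; split => //; rewrite eW -/c cm.
  move=> W sW; have [s hs] := K2 uP hrho hD htau sW.
  rewrite -/m -cm; apply: lerXn2r; rewrite ?qualifE /= ?normr_ge0 //.
  by rewrite -(hcs s).
Qed.

Lemma p_real (dA dB : nat) (psi : 'cV[C]_(dA * dB)) (p : 'I_dA -> C) :
  char_poly (rhoA psi) = \prod_(i < dA) ('X - (p i)%:P) ->
  forall i, p i \is Num.real.
Proof.
move=> hcp.
have [P [D [uP hrho hD]]] := rho_decomp psi.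
have cpD : char_poly (rhoA psi) = \prod_i ('X - (D 0 i)%:P).
  by rewrite hrho char_poly_conj ?unitary_sq // char_poly_diag.
have [tau htau] : exists tau : 'S_dA, forall i, p i = D 0 (tau i).
  by apply: prod_perm; rewrite -hcp cpD.
by move=> i; rewrite htau.
Qed.
End Part1.

Section Small.
Variable C : numClosedFieldType.

Lemma const_from d (p : 'I_d -> C) (F : C -> C -> C) :
  (forall s : 'S_d, `|\sum_(i < d) stellar_lambda i * p (s i)| ^+ 2 =
      F (\sum_i p (s i)) (\sum_i p (s i) ^+ 2)) ->
  forall s t : 'S_d, `|\sum_(i < d) stellar_lambda i * p (s i)|
    = `|\sum_(i < d) stellar_lambda i * p (t i)|.
Proof.
move=> h s t.
have e1 (u : 'S_d) : \sum_i p (u i) = \sum_i p i.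
  by rewrite [RHS](reindex_inj (@perm_inj _ u)).
have e2 (u : 'S_d) : \sum_i p (u i) ^+ 2 = \sum_i p i ^+ 2.
  by rewrite [RHS](reindex_inj (@perm_inj _ u)).
apply/eqP; rewrite -(eqrXn2 (_ : 0 < 2)%N) ?normr_ge0 //.
by rewrite !h !e1 !e2.
Qed.

Lemma small_const d (p : 'I_d -> C) : (2 <= d <= 3)%N ->
  (forall i, p i \is Num.real) ->
  forall s t : 'S_d, `|\sum_(i < d) stellar_lambda i * p (s i)|
    = `|\sum_(i < d) stellar_lambda i * p (t i)|.
Proof.
move=> hd hp.
have d2 : (1 < d)%N by case/andP: hd.
have nw : `|d.-root (-1 : C)| = 1 by apply: norm_w.
have wd : d.-root (-1 : C) ^+ d = -1 by apply: w_d.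
have zd : zeta C d ^+ d = 1 by apply: zeta_d.
have z1 : zeta C d != 1 by apply: zeta_neq1.
have nz : `|zeta C d| = 1 by apply: norm_zeta.
have [e|e] : (d = 2)%N \/ (d = 3)%N by lia.
- subst d.
  have zE : zeta C 2 = -1 by rewrite /zeta wd invrN invr1.
  apply: (@const_from 2 p (fun a b => 2%:R * b - a ^+ 2)) => s.
  rewrite !big_ord_recl !big_ord0 !addr0 !lamE //= zE /=.
  set q0 := p (s ord0); set q1 := p (s (lift ord0 ord0)).
  have b : bump 0 0 = 1%N by [].
  rewrite b expr1 expr0 mulr1 expr1.
  have -> : 2.-root (-1 : C) * q0 + 2.-root (-1) * -1 * q1 = 2.-root (-1) * (q0 - q1) by ring.
  rewrite normrM exprMn nw expr1n mul1r real_normK; last by rewrite rpredB ?hp.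
  ring.
- subst d.
  set z := zeta C 3 in zd z1 nz *.
  have zc : z^* = z ^+ 2.
    have h1 : z * z^* = 1 by rewrite -normCK nz expr1n.
    by rewrite -[z^*]mul1r -zd exprS -mulrA mulrCA h1 mulr1 expr2.
  have zq : z ^+ 2 + z + 1 = 0.
    have : (z - 1) * (z ^+ 2 + z + 1) = z ^+ 3 - 1 by ring.
    rewrite zd subrr.
    by move/eqP; rewrite mulf_eq0 subr_eq0 (negbTE z1) /= => /eqP.
  apply: (@const_from 3 p (fun a b => (3%:R * b - a ^+ 2) / 2%:R)) => s.
  rewrite !big_ord_recl !big_ord0 !addr0 !lamE //= -/z.
  set q0 := p (s ord0); set q1 := p (s (lift ord0 (ord0 : 'I_2))).
  set q2 := p (s (lift ord0 (lift ord0 (ord0 : 'I_1)))).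
  have b1 : bump 0 0 = 1%N by [].
  have b2 : bump 0 (bump 0 0) = 2%N by [].
  rewrite b2 b1 expr1 expr0 mulr1.
  have -> : 3.-root (-1 : C) ^+ 2 * q0 + (3.-root (-1) ^+ 2 * z * q1 +
      3.-root (-1) ^+ 2 * z ^+ 2 * q2) = 3.-root (-1) ^+ 2 * (q0 + z * q1 + z ^+ 2 * q2) by ring.
  rewrite normrM normrX nw expr1n mul1r normCK !rmorphD !rmorphM /=.
  have r0 : q0^* = q0 by apply/CrealP; rewrite hp.
  have r1 : q1^* = q1 by apply/CrealP; rewrite hp.
  have r2 : q2^* = q2 by apply/CrealP; rewrite hp.
  rewrite r0 r1 r2 zc.
  have h2 : (2%:R : C) != 0 by rewrite pnatr_eq0.
  apply/eqP; rewrite -subr_eq0; apply/eqP.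
  transitivity (((z ^+ 3 - 1) * (q1 ^+ 2 + (z ^+ 3 + 1) * q2 ^+ 2 + z * q0 * q2 + (z ^+ 2 + z) * q1 * q2)
       + (z ^+ 2 + z + 1) * (q0 * q1 + q0 * q2 + q1 * q2))); first by field.
  by rewrite zd zq subrr !mul0r addr0.
Qed.
End Small.

End Aux.
Import Aux.

Theorem mainTheorem7 (C : numClosedFieldType) (dA dB : nat)
    (hdA : (2 <= dA)%N) (hAB : (dA <= dB)%N) :
  (forall (psi : 'cV[C]_(dA * dB)) (p : 'I_dA -> C),
     unit_vec psi ->
     char_poly (rhoA psi) = \prod_(i < dA) ('X - (p i)%:P) ->
     (stellar_mirror_ent psi (linear_entropy p) <->
      (forall s t : 'S_dA,
         `|\sum_(i < dA) stellar_lambda i * p (s i)|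
         = `|\sum_(i < dA) stellar_lambda i * p (t i)|)))
  /\
  ((dA <= 3)%N ->
   forall (psi : 'cV[C]_(dA * dB)) (p : 'I_dA -> C),
     unit_vec psi ->
     char_poly (rhoA psi) = \prod_(i < dA) ('X - (p i)%:P) ->
     stellar_mirror_ent psi (linear_entropy p)).
Proof.
split.
  by move=> psi p hu hcp; apply: part1.
move=> h3 psi p hu hcp.
apply/(part1 hdA hu hcp).
apply: small_const; first by rewrite hdA h3.
exact: p_real hcp.
Qed.
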